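(* Let $n\ge0$, let $P_k=s_k\vec e_k\in\mathbb{R}^{n+1}$ for $0\le k\le n$, and let $Q=(i_0,\dots,i_n)\in\mathbb{Z}^{n+1}$ with $0\le i_k\le s_k-1$ for all $k$ and $\sum_{k=0}^nd_{n,k}i_k<d_n$. Let $0\le j\le n$ be an index with $i_j\ne0$, and let $w(x_0,\dots,x_n)=\sum_{k=0}^nw_kx_k$ be a linear function with $w(Q)=d_n$ and $w(P_k)=d_n$ for all $k\ne j$. Then (1) $\sum_{k=0}^nw_k\ge d_n$; and (2) if $\sum_{k=0}^nw_k=d_n$, then $\sum_{k=0}^{n-1}d_{n-1,k}i_k+i_n=d_{n-1}$.
   Context: Sylvester numbers: $s_0=2$, $s_{k+1}=1+\prod_{i=0}^ks_i$. For $m\ge0$, $d_m=\prod_{k=0}^ms_k$ and $d_{m,k}=d_m/s_k$. $\vec e_0,\dots,\vec e_n$ is the standard basis of $\mathbb{R}^{n+1}$. *)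

(* Defs.v *)
From HB Require Import structures.
From mathcomp Require Import all_boot all_order all_algebra.
From mathcomp Require Import zify.
Set Implicit Arguments. Unset Strict Implicit. Unset Printing Implicit Defensive.
Import Order.TTheory GRing.Theory Num.Theory.

(* Auxiliary: sylv_pre m = s_0 * ... * s_m, computed by the recursion
   s_{m+1} = 1 + s_0...s_m, hence prod_{0..m+1} = prod_{0..m} * (prod_{0..m} + 1). *)
Fixpoint sylv_pre (m : nat) : nat :=
  match m with
  | 0 => 2
  | m'.+1 => sylv_pre m' * (sylv_pre m' + 1)
  end.

Definition sylv (k : nat) : nat :=
  match k with
  | 0 => 2
  | k'.+1 => (sylv_pre k').+1
  end.

(* dprod m = prod_{k < m} s_k ; so the paper's d_m is dprod m.+1, and
   dprod 0 = 1 (empty product, convention for d_{-1}). *)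
Definition dprod (m : nat) : nat := \prod_(k < m) sylv k.

(* d_{m,k} in paper = d_m / s_k, i.e. dprodk m.+1 k *)
Definition dprodk (m k : nat) : nat := dprod m %/ sylv k.

Lemma sylv_pre_dprod m : sylv_pre m = dprod m.+1.
Proof.
elim: m => [|m IH]; first by rewrite /dprod big_ord1.
by rewrite /dprod big_ord_recr /= -/(dprod m.+1) -IH addn1.
Qed.

Lemma sylv0 : sylv 0 = 2. Proof. by []. Qed.
Lemma sylvS k : sylv k.+1 = 1 + \prod_(i < k.+1) sylv i.
Proof. by rewrite /= sylv_pre_dprod add1n. Qed.

(* Main.v *)
Require Import Defs.
From HB Require Import structures.
From mathcomp Require Import all_boot all_order all_algebra.
From mathcomp Require Import zify ring lra.
Import Order.TTheory GRing.Theory Num.Theory.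
Set Implicit Arguments. Unset Strict Implicit.

Lemma sylvE m : sylv m = (dprod m).+1.
Proof. case: m => [|m]; first by rewrite /dprod big_ord0.
by change (sylv m.+1) with (sylv_pre m).+1; rewrite sylv_pre_dprod. Qed.

Lemma dprodS m : dprod m.+1 = dprod m * sylv m.
Proof. by rewrite /dprod big_ord_recr. Qed.

Lemma dprod_gt0 m : 0 < dprod m.
Proof. by elim: m => [|m IH]; rewrite ?dprodS ?muln_gt0 ?IH ?sylvE // /dprod big_ord0. Qed.

Lemma sylv_gt1 k : 1 < sylv k.
Proof. by rewrite sylvE ltnS dprod_gt0. Qed.

Lemma dprodkE m (k : 'I_m) : dprodk m k = \prod_(i < m | i != k) sylv i.
Proof.
rewrite /dprodk /dprod (bigD1 k) //= mulKn //; exact: ltnW (sylv_gt1 k).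
Qed.

Lemma dprodkK m (k : 'I_m) : dprodk m k * sylv k = dprod m.
Proof. by rewrite dprodkE mulnC /dprod [in RHS](bigD1 k). Qed.

Lemma dvd_dprodk m (k j : 'I_m) : j != k -> sylv j %| dprodk m k.
Proof.
move=> jk; rewrite dprodkE (bigD1 j) //=; exact: dvdn_mulr.
Qed.

Lemma dvd_sylv_dprod m (k : 'I_m) : sylv k %| dprod m.
Proof. by rewrite -(dprodkK k) dvdn_mull. Qed.

Lemma sylv_mono k m : k <= m -> sylv k <= sylv m.
Proof.
rewrite leq_eqVlt => /orP [/eqP -> //| km].
rewrite (sylvE m) ltnW // ltnS dvdn_leq ?dprod_gt0 //.
exact: (dvd_sylv_dprod (Ordinal km)).
Qed.

Lemma sum_dprodk m : \sum_(k < m) dprodk m k + 1 = dprod m.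
Proof.
elim: m => [|m IH]; first by rewrite big_ord0 /dprod big_ord0.
rewrite big_ord_recr /=.
have -> : dprodk m.+1 (@ord_max m) = dprod m.
  by rewrite /dprodk dprodS /= mulnK // ltnW // sylv_gt1.
rewrite (eq_bigr (fun k : 'I_m => dprodk m k * sylv m)); last first.
  move=> k _; rewrite /dprodk dprodS /= divn_mulAC //; exact: dvd_sylv_dprod.
rewrite -big_distrl /= dprodS.
have h := IH; move: h; set s := \sum_(_ < m) _ => h.
rewrite -h sylvE; lia.
Qed.

Lemma dprodkS n (k : 'I_n.+1) (kn : (k < n)%N) : dprodk n.+1 k = dprodk n k * sylv n.
Proof.
rewrite /dprodk dprodS divn_mulAC //; exact: (dvd_sylv_dprod (Ordinal kn)).
Qed.

Lemma dprodk_last n : dprodk n.+1 (@ord_max n) = dprod n.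
Proof. by rewrite /dprodk dprodS /= mulnK // ltnW // sylv_gt1. Qed.

Local Open Scope ring_scope.

Theorem lemma5p1 (R : realFieldType) (n : nat)
    (i : 'I_n.+1 -> int) (j : 'I_n.+1) (w : 'I_n.+1 -> R) :
  (forall k : 'I_n.+1, 0 <= i k /\ i k <= (sylv k)%:Z - 1) ->
  \sum_(k < n.+1) (dprodk n.+1 k)%:Z * i k < (dprod n.+1)%:Z ->
  i j != 0 ->
  \sum_(k < n.+1) w k * (i k)%:~R = (dprod n.+1)%:R ->
  (forall k : 'I_n.+1, k != j -> w k * (sylv k)%:R = (dprod n.+1)%:R) ->
  (dprod n.+1)%:R <= \sum_(k < n.+1) w k /\
  (\sum_(k < n.+1) w k = (dprod n.+1)%:R ->
     \sum_(k < n.+1 | (k < n)%N) (dprodk n k)%:Z * i k + i ord_max = (dprod n)%:Z).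
Proof.
move=> Hi HS Hij HwQ Hw.
have wE : forall k, k != j -> w k = (dprodk n.+1 k)%:R.
  move=> k /Hw; rewrite -(dprodkK k) natrM => /mulIf; apply.
  by rewrite pnatr_eq0 -lt0n ltnW // sylv_gt1.
set D := dprod n.+1 in HS HwQ Hw *.
set c := dprodk n.+1.
set Sj := \sum_(k < n.+1 | k != j) (c k)%:Z * i k.
have HSs : \sum_(k < n.+1) (c k)%:Z * i k = (c j)%:Z * i j + Sj by rewrite (bigD1 j).
have Hsum : (\sum_(k < n.+1 | k != j) c k + c j + 1 = D)%N.
  by rewrite /D /c -(sum_dprodk n.+1) [in RHS](bigD1 j) //= [(dprodk _ j + _)%N]addnC.
have HwQ' : w j * (i j)%:~R + Sj%:~R = D%:R.
  rewrite -HwQ (bigD1 j) //=; congr (_ + _).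
  rewrite rmorph_sum /=; apply: eq_bigr => k kj.
  by rewrite rmorphM /= wE.
have Hsw : \sum_(k < n.+1) w k = w j + (D%:R - 1 - (c j)%:R).
  rewrite (bigD1 j) //=; congr (_ + _).
  rewrite -Hsum !natrD addrK addrK natr_sum; exact: eq_bigr.
have dD : (sylv j %| D)%N by exact: dvd_sylv_dprod.
have dSj : (sylv j %| Sj)%Z.
  apply: rpred_sum => k kj; apply: dvdz_mulr.
  by rewrite dvdzE !absz_nat /c dvd_dprodk // eq_sym.
have dcj : (sylv j %| c j + 1)%N.
  have := dD; rewrite -Hsum -addnA dvdn_addr //.
  by apply: dvdn_sum => k kj; rewrite dvd_dprodk // eq_sym.
have dE : (sylv j %| (D%:Z - ((c j)%:Z * i j + Sj)) - i j)%Z.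
  have -> : (D%:Z - ((c j)%:Z * i j + Sj)) - i j = D%:Z - ((c j + 1)%N%:Z * i j) - Sj.
    by rewrite PoszD; ring.
  by rewrite rpredB // ?rpredB // dvdz_mulr.
have [Hij0 Hijs] := Hi j.
have ij_gt0 : 0 < i j by rewrite lt0r Hij Hij0.
have Ege : i j <= D%:Z - ((c j)%:Z * i j + Sj).
  move: HS; rewrite HSs => HS.
  case/dvdzP: dE => q Hq.
  have sj1 : 1 < (sylv j)%:Z by rewrite ltz_nat sylv_gt1.
  have [q0|q0] := lerP 0 q; first by nia.
  exfalso. have q1 : q <= -1 by lia.
  nia.
have EgeR : (i j)%:~R <= (D%:Z - ((c j)%:Z * i j + Sj))%:~R :> R by rewrite ler_int.
rewrite rmorphB rmorphD rmorphM /= -!pmulrn in EgeR.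
have ijR : 0 < (i j)%:~R :> R by rewrite ltr0z.
have wjge : (c j)%:R + 1 <= w j.
  rewrite -(ler_pM2r ijR); nra.
split; first by rewrite Hsw; lra.
move=> Hsum_eq.
have wjE : w j = (c j)%:R + 1 by move: Hsum_eq; rewrite Hsw; lra.
have Eeq : D%:Z - ((c j)%:Z * i j + Sj) = i j.
  apply: (@intr_inj R); rewrite rmorphB rmorphD rmorphM /= -!pmulrn.
  move: HwQ'; rewrite wjE; lra.
set T := \sum_(k < n.+1 | (k < n)%N) (dprodk n k)%:Z * i k.
have HS2 : (c j)%:Z * i j + Sj = (sylv n)%:Z * T + (dprod n)%:Z * i ord_max.
  rewrite -HSs (bigD1 ord_max) //= addrC /c dprodk_last; congr (_ + _).
  rewrite /T big_distrr /=; apply: eq_big => k.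
    by rewrite -val_eqE /= ltn_neqAle -ltnS ltn_ord andbT.
  move=> kn; have kn' : (k < n)%N.
    by move: kn; rewrite -val_eqE /= ltn_neqAle -ltnS ltn_ord andbT.
  rewrite dprodkS // (PoszM (dprodk n k) (sylv n)); ring.
have HD : D = (dprod n * sylv n)%N by rewrite /D dprodS.
have Hsn : sylv n = (dprod n).+1 by rewrite sylvE.
have sjn : (sylv j <= sylv n)%N by apply: sylv_mono; rewrite -ltnS.
have [Hm0 Hm1] := Hi ord_max.
move: Eeq; rewrite HS2 HD Hsn => Eeq.
rewrite Hsn in Hm1 sjn Hijs.
clear HS2 HSs EgeR Ege dE; move: Eeq Hm1 sjn Hijs ij_gt0 Hm0.
rewrite !PoszM !intS -lez_nat intS.
clearbody T; move: (dprod n) T (i ord_max) (i j) (sylv j) => d t a b s.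
move=> Eeq Hm1 sjn Hijs ij_gt0 Hm0.
have key : (1 + d%:Z) * (d%:Z - t - a) + a = b by rewrite -Eeq; ring.
have [X0|X0] := ltrP 0 (d%:Z - t - a).
  exfalso; nia.
have [X1|X1] := ltrP (d%:Z - t - a) 0.
  exfalso; nia.
lia.
Qed.
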